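(* Let $N=2^{d_1+1}$ and, for an operator $\Phi$ on $\mathbb C^N$, let $\mathcal T(\Phi)=\frac{1}{N!}\sum_{\sigma\in\mathrm{Sym}(N)}U_\sigma\Phi U_\sigma^\dagger$, where $U_\sigma$ is the permutation matrix of $\sigma$. In the setting of the context: (i) Averaging over a uniformly random key $k\in\{0,1\}^{2d_1}$ and a uniformly random permutation $\sigma$, the original ciphertext has expectation $\mathbb E_{\sigma,k}[M_f^{(0)}]=\frac{1}{2^{d_1+1}}I_{2^{d_1+1}}$. (ii) Let $\overline{M}_a^{(1)}$ denote $M_a^{(1)}$ with $M_o'$ replaced by $\mathbb E_k[M_o']=2^{-d_1}I_{2^{d_1}}$ and $M_c''$ replaced by $\mathbb E_{k'}[M_c'']=2^{-d_2}VV^\dagger$ (keys uniform). Then \[ \mathcal T\big(\overline{M}_a^{(1)}\big)=\frac{2^{d_1+1}-1-\frac2\eta}{2^{d_1+1}(2^{d_1+1}-1)}\,I+\frac{2/\eta}{2^{d_1+1}(2^{d_1+1}-1)}\,J, \] where $J$ is the $N\times N$ all-ones matrix. (iii) The trace distance between the averaged states in (ii) and (i) equals $\frac{1}{\eta\,2^{d_1}}$, which is less than $\varepsilon$. (iv) For any two input pairs $(M_o,M_c)$ and $(\tilde M_o,\tilde M_c)$ of the same dimensions, the averaged anamorphic states obtained as in (ii) (all keys drawn uniformly from the same key sets) have trace distance $0$.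
   Context: Let $d_1\ge d_2\ge1$, $\mathcal H_M=(\mathbb C^2)^{\otimes d_1}$, $\mathcal H_{M_c}=(\mathbb C^2)^{\otimes d_2}$, and $U_k=\bigotimes_{j}X^{k_{2j-1}}Z^{k_{2j}}$ (Pauli $X,Z$) for bit strings $k$. $M_o$ is a strictly positive definite density matrix on $\mathcal H_M$, $M_c$ a density matrix on $\mathcal H_{M_c}$; $M_o'=U_kM_oU_k^\dagger$ with $k\in\{0,1\}^{2d_1}$, $M_c'=U_{k'}M_cU_{k'}^\dagger$ with $k'\in\{0,1\}^{2d_2}$, $V|\psi\rangle=|\psi\rangle\otimes|0\rangle^{\otimes(d_1-d_2)}$, $M_c''=VM_c'V^\dagger$. For $\eta\in\mathbb Z^+$, on $\mathbb C^2\otimes\mathcal H_M$ (blocks w.r.t. the first qubit), $M_a^{(0)}=\begin{pmatrix}\frac12M_o'&0\\0&\frac12M_o'\end{pmatrix}$, $M_a^{(1)}=\begin{pmatrix}\frac12M_o'&\frac1\eta M_c''\\\frac1\eta(M_c'')^\dagger&\frac12M_o'\end{pmatrix}$, and $M_f^{(b)}=U_\sigma M_a^{(b)}U_\sigma^\dagger$ for a permutation $\sigma\in\mathrm{Sym}(2^{d_1+1})$. Standing assumption of the construction: for a given threshold $\varepsilon>0$ (written $\mathsf{negl}(\lambda)$), $\eta$ satisfies $1/\eta<\varepsilon$ and $\frac1{\eta^2}\|M_c''(M_o')^{-1}M_c''\|\le\frac14\lambda_{\min}(M_o')$. Trace distance $D(\rho,\tau)=\frac12\|\rho-\tau\|_1$.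 *)

(* Defs.v *)
(* complex matrices over an arbitrary numClosedFieldType C
   (e.g. the complex numbers R[i]). *)
From HB Require Import structures.
From mathcomp Require Import all_boot all_order all_fingroup all_algebra.
Set Implicit Arguments. Unset Strict Implicit. Unset Printing Implicit Defensive.
Import Order.TTheory GRing.Theory Num.Theory.
Local Open Scope ring_scope.

Section Defs.
Variable C : numClosedFieldType.

Definition adj m n (A : 'M[C]_(m, n)) : 'M[C]_(n, m) :=
  map_mx Num.conj (A^T).

(* eigenvalues (with algebraic multiplicity) = roots of the characteristic
   polynomial, which splits since C is algebraically closed *)
Definition eigs n (A : 'M[C]_n) : seq C :=
  sval (closed_field_poly_normal (char_poly A)).

(* trace norm ||A||_1 = tr sqrt(A^dagger A) = sum of singular values *)
Definition trnorm n (A : 'M[C]_n) : C :=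
  \sum_(z <- eigs (adj A *m A)) sqrtC z.

Definition tdist n (A B : 'M[C]_n) : C := 2^-1 * trnorm (A - B).

Definition opnorm n (A : 'M[C]_n) : C :=
  \big[Num.max/0]_(z <- eigs (adj A *m A)) sqrtC z.

(* smallest eigenvalue (the eigenvalues of a Hermitian matrix are real) *)
Definition lambda_min n (A : 'M[C]_n) : C :=
  \big[Num.min/head 0 (eigs A)]_(z <- eigs A) z.

Definition hermitian n (A : 'M[C]_n) : Prop := adj A = A.
Definition psd n (A : 'M[C]_n) : Prop :=
  forall v : 'cV[C]_n, 0 <= (adj v *m A *m v) 0 0.
Definition posdef n (A : 'M[C]_n) : Prop :=
  forall v : 'cV[C]_n, v != 0 -> 0 < (adj v *m A *m v) 0 0.
Definition density n (A : 'M[C]_n) : Prop :=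
  [/\ hermitian A, psd A & \tr A = 1].

Definition pauliX : 'M[C]_2 := \matrix_(i, j) (i != j)%:R.
Definition pauliZ : 'M[C]_2 := \matrix_(i, j) ((i == j)%:R * (-1) ^+ i).
Definition pauliXZ (a b : bool) : 'M[C]_2 :=
  (if a then pauliX else 1%:M) *m (if b then pauliZ else 1%:M).

(* Qubit j (j = 0 is the first qubit) of a basis index r of (C^2)^{(x)d};
   convention: the first qubit is the most significant bit. *)
Definition qbit d (r : 'I_(2 ^ d)) (j : 'I_d) : 'I_2 :=
  inord ((r %/ 2 ^ (d.-1 - j)) %% 2).

Definition tens d (A : 'I_d -> 'M[C]_2) : 'M[C]_(2 ^ d) :=
  \matrix_(r, c) \prod_(j < d) A j (qbit r j) (qbit c j).

(* keys k in {0,1}^{2d}: the pair (k_{2j-1}, k_{2j}) for qubit j *)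
Definition key d := {ffun 'I_d -> bool * bool}.

Definition Uk d (k : key d) : 'M[C]_(2 ^ d) :=
  tens (fun j => pauliXZ (k j).1 (k j).2).

(* V |psi> = |psi> (x) |0>^{(d1-d2)} *)
Definition Vmx d1 d2 : 'M[C]_(2 ^ d1, 2 ^ d2) :=
  \matrix_(i, j) ((i : nat) == j * 2 ^ (d1 - d2))%N%:R.

Definition conjU d (k : key d) (M : 'M[C]_(2 ^ d)) : 'M[C]_(2 ^ d) :=
  Uk k *m M *m adj (Uk k).

Definition Mcpp d1 d2 (k' : key d2) (Mc : 'M[C]_(2 ^ d2)) : 'M[C]_(2 ^ d1) :=
  Vmx d1 d2 *m conjU k' Mc *m adj (Vmx d1 d2).

Lemma expS_add d : (2 ^ d + 2 ^ d = 2 ^ d.+1)%N.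
Proof. by rewrite expnS mul2n addnn. Qed.

(* block matrix w.r.t. the first qubit on C^2 (x) H_M *)
Definition blk d (A B D E : 'M[C]_(2 ^ d)) : 'M[C]_(2 ^ d.+1) :=
  castmx (expS_add d, expS_add d) (block_mx A B D E).

Definition Ma0 d (Mo' : 'M[C]_(2 ^ d)) : 'M[C]_(2 ^ d.+1) :=
  blk (2^-1 *: Mo') 0 0 (2^-1 *: Mo').

Definition Ma1 d (eta : nat) (Mo' Mc'' : 'M[C]_(2 ^ d)) : 'M[C]_(2 ^ d.+1) :=
  blk (2^-1 *: Mo') ((eta%:R)^-1 *: Mc'') ((eta%:R)^-1 *: adj Mc'') (2^-1 *: Mo').

Definition permconj N (s : 'S_N) (Phi : 'M[C]_N) : 'M[C]_N :=
  perm_mx s *m Phi *m adj (perm_mx s).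

Definition twirl N (Phi : 'M[C]_N) : 'M[C]_N :=
  (N`!%:R)^-1 *: \sum_(s : 'S_N) permconj s Phi.

Definition EMf0 d1 (Mo : 'M[C]_(2 ^ d1)) : 'M[C]_(2 ^ d1.+1) :=
  (((2 ^ d1.+1)`! * 2 ^ (2 * d1))%:R)^-1 *:
    \sum_(s : 'S_(2 ^ d1.+1)) \sum_(k : key d1) permconj s (Ma0 (conjU k Mo)).

Definition EMo d1 (Mo : 'M[C]_(2 ^ d1)) : 'M[C]_(2 ^ d1) :=
  ((2 ^ (2 * d1))%:R)^-1 *: \sum_(k : key d1) conjU k Mo.
Definition EMc d1 d2 (Mc : 'M[C]_(2 ^ d2)) : 'M[C]_(2 ^ d1) :=
  ((2 ^ (2 * d2))%:R)^-1 *: \sum_(k' : key d2) Mcpp d1 k' Mc.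

Definition Mbar1 d1 d2 (eta : nat) (Mo : 'M[C]_(2 ^ d1)) (Mc : 'M[C]_(2 ^ d2))
  : 'M[C]_(2 ^ d1.+1) := Ma1 eta (EMo Mo) (EMc d1 Mc).

End Defs.

(* Main.v *)
Require Import Defs.
From HB Require Import structures.
From mathcomp Require Import all_boot all_order all_fingroup all_algebra.
From mathcomp Require Import ring zify.
Set Implicit Arguments. Unset Strict Implicit. Unset Printing Implicit Defensive.
Import Order.TTheory GRing.Theory Num.Theory.
Local Open Scope ring_scope.

Definition sumall (C : numClosedFieldType) n (A : 'M[C]_n) : C := \sum_i \sum_j A i j.

Lemma adj_perm_mx (C : numClosedFieldType) N (s : 'S_N) :
  adj (perm_mx s : 'M[C]_N) = (perm_mx s)^T.
Proof.
apply/matrixP => i j; rewrite /adj !mxE.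
by rewrite rmorph_nat.
Qed.

Lemma permconjE (C : numClosedFieldType) N (s : 'S_N) (Phi : 'M[C]_N) :
  permconj s Phi = \matrix_(i, j) Phi (s i) (s j).
Proof.
rewrite /permconj adj_perm_mx tr_perm_mx -row_permE -col_permE.
by apply/matrixP => i j; rewrite !mxE.
Qed.

Lemma G_inv (C : numClosedFieldType) N (Phi : 'M[C]_N) (t : 'S_N) i j :
  \sum_(s : 'S_N) Phi (s (t i)) (s (t j)) = \sum_(s : 'S_N) Phi (s i) (s j).
Proof.
rewrite [RHS](reindex_inj (mulgI t)) /=.
by apply: eq_bigr => s _; rewrite !permM.
Qed.

Lemma G_diag (C : numClosedFieldType) N (Phi : 'M[C]_N) i i' :
  \sum_(s : 'S_N) Phi (s i) (s i) = \sum_(s : 'S_N) Phi (s i') (s i').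
Proof. by rewrite -(G_inv Phi (tperm i i')) tpermL. Qed.

Lemma G_off (C : numClosedFieldType) N (Phi : 'M[C]_N) i j i' j' :
  i != j -> i' != j' ->
  \sum_(s : 'S_N) Phi (s i) (s j) = \sum_(s : 'S_N) Phi (s i') (s j').
Proof.
move=> hij hij'.
set t1 := tperm i i'.
have e1 := G_inv Phi t1 i j.
rewrite /t1 tpermL in e1; rewrite -e1.
have hne : i' != t1 j.
  by rewrite -[X in X != _](tpermL i i') (inj_eq perm_inj).
set t2 := tperm (t1 j) j'.
have e2 := G_inv Phi t2 i' (t1 j).
rewrite /t2 tpermL tpermD in e2; first by rewrite -e2.
  by rewrite eq_sym.
by rewrite eq_sym.
Qed.

Lemma twirlE (C : numClosedFieldType) N (Phi : 'M[C]_N) : (1 < N)%N ->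
  twirl Phi = (\tr Phi / N%:R - (sumall Phi - \tr Phi) / (N%:R * (N%:R - 1))) *: 1%:M
     + ((sumall Phi - \tr Phi) / (N%:R * (N%:R - 1))) *: const_mx 1.
Proof.
move=> hN.
set G := fun i j => \sum_(s : 'S_N) Phi (s i) (s j).
have tw : forall i j, twirl Phi i j = (N`!%:R)^-1 * G i j.
  move=> i j; rewrite /twirl mxE summxE; congr (_ * _).
  by apply: eq_bigr => s _; rewrite permconjE mxE.
have Nf0 : (N`!%:R : C) != 0 by rewrite pnatr_eq0 -lt0n fact_gt0.
have N0 : (N%:R : C) != 0 by rewrite pnatr_eq0 -lt0n; lia.
have N10 : (N%:R - 1 : C) != 0.
  by rewrite subr_eq0 pnatr_eq1; lia.
have eN1 : (N%:R - 1 : C) = (N.-1)%:R by rewrite -subn1 natrB; [by [] | lia].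
have sa : \sum_i G i i = N`!%:R * \tr Phi.
  rewrite /G exchange_big /= mulr_natl -card_Sn -sumr_const.
  apply: eq_bigr => s _; rewrite /mxtrace.
  by rewrite [RHS](reindex_inj (@perm_inj _ s)).
have sb : \sum_i \sum_j G i j = N`!%:R * sumall Phi.
  rewrite /G.
  under eq_bigr => i _ do rewrite exchange_big /=.
  rewrite exchange_big /= mulr_natl -card_Sn -sumr_const.
  apply: eq_bigr => s _; rewrite /sumall.
  rewrite [RHS](reindex_inj (@perm_inj _ s)) /=.
  by apply: eq_bigr => i _; rewrite [RHS](reindex_inj (@perm_inj _ s)).
have ca : forall i, N%:R * G i i = \sum_i' G i' i'.
  move=> i; rewrite -{1}(card_ord N) mulr_natl -sumr_const.
  by apply: eq_bigr => i' _; rewrite /G (G_diag Phi i i').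
have cb : forall i j, i != j -> \sum_i \sum_j G i j = \sum_i G i i + N%:R * (N%:R - 1) * G i j.
  move=> i j hij.
  have row : forall i', \sum_j G i' j = G i' i' + (N.-1)%:R * G i j.
    move=> i'; rewrite (bigD1 i') //=; congr (_ + _).
    transitivity (\sum_(j' in predC1 i') G i j).
      apply: eq_bigr => j' hj'; rewrite /G; apply: G_off => //.
      by rewrite eq_sym.
    by rewrite sumr_const cardC1 card_ord mulr_natl.
  under eq_bigr => i' _ do rewrite row.
  rewrite big_split /= eN1.
  by rewrite [X in _ + X]big_const_ord iter_addr_0 -mulrA [in RHS]mulr_natl.
apply/matrixP => i j; rewrite tw !mxE.
case: (eqVneq i j) => [<-|hij] /=.
  have := ca i; rewrite sa => e.
  have -> : G i i = N`!%:R * \tr Phi / N%:R.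
    by apply: (mulfI N0); rewrite e [RHS]mulrC divfK.
  by field; apply/and3P.
have := cb i j hij; rewrite sa sb => e.
have -> : G i j = N`!%:R * (sumall Phi - \tr Phi) / (N%:R * (N%:R - 1)).
  apply: (mulfI (mulf_neq0 N0 N10)).
  rewrite [RHS]mulrC divfK ?mulf_neq0 // [RHS]mulrBr e.
  ring.
by field; apply/and3P.
Qed.

Lemma tr_cast (C : numClosedFieldType) m n (e : m = n) (A : 'M[C]_m) :
  \tr (castmx (e, e) A) = \tr A.
Proof. by case: n / e; rewrite castmx_id. Qed.

Lemma sumall_cast (C : numClosedFieldType) m n (e : m = n) (A : 'M[C]_m) :
  sumall (castmx (e, e) A) = sumall A.
Proof. by case: n / e; rewrite castmx_id. Qed.

Lemma scalar_cast (C : numClosedFieldType) m n (e : m = n) (a : C) :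
  castmx (e, e) (a%:M : 'M[C]_m) = a%:M.
Proof. by case: n / e; rewrite castmx_id. Qed.

Lemma tr_blk (C : numClosedFieldType) d (A B D E : 'M[C]_(2 ^ d)) :
  \tr (blk A B D E) = \tr A + \tr E.
Proof. by rewrite /blk tr_cast mxtrace_block. Qed.

Lemma sumall_blk (C : numClosedFieldType) d (A B D E : 'M[C]_(2 ^ d)) :
  sumall (blk A B D E) = sumall A + sumall B + sumall D + sumall E.
Proof.
rewrite /blk sumall_cast /sumall big_split_ord /=.
under eq_bigr => i _ do rewrite big_split_ord /=.
under [X in _ + X]eq_bigr => i _ do rewrite big_split_ord /=.
rewrite !big_split /= !addrA.
by congr (_ + _ + _ + _); apply: eq_bigr => i _; apply: eq_bigr => j _;
  rewrite ?block_mxEul ?block_mxEur ?block_mxEdl ?block_mxEdr.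
Qed.

Lemma sumallD (C : numClosedFieldType) n (A B : 'M[C]_n) :
  sumall (A + B) = sumall A + sumall B.
Proof.
rewrite /sumall -big_split; apply: eq_bigr => i _.
by rewrite -big_split; apply: eq_bigr => j _; rewrite mxE.
Qed.

Lemma sumallZ (C : numClosedFieldType) n a (A : 'M[C]_n) :
  sumall (a *: A) = a * sumall A.
Proof.
rewrite /sumall mulr_sumr; apply: eq_bigr => i _.
by rewrite mulr_sumr; apply: eq_bigr => j _; rewrite mxE.
Qed.

Lemma sumall_scalar (C : numClosedFieldType) n (a : C) :
  sumall (a%:M : 'M[C]_n) = a * n%:R.
Proof.
rewrite /sumall.
transitivity (\sum_(i < n) a).
  apply: eq_bigr => i _; rewrite (bigD1 i) //= big1 ?addr0; first by rewrite mxE eqxx.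
  by move=> j hj; rewrite mxE eq_sym (negbTE hj).
by rewrite big_const_ord iter_addr_0 mulr_natr.
Qed.

Lemma sumall_adj (C : numClosedFieldType) n (A : 'M[C]_n) :
  sumall (adj A) = Num.conj (sumall A).
Proof.
rewrite /sumall exchange_big rmorph_sum; apply: eq_bigr => i _.
by rewrite rmorph_sum; apply: eq_bigr => j _; rewrite !mxE.
Qed.

Lemma permconj_scalar (C : numClosedFieldType) N (s : 'S_N) (a : C) :
  permconj s a%:M = a%:M.
Proof.
by rewrite permconjE; apply/matrixP => i j; rewrite !mxE (inj_eq perm_inj).
Qed.

Lemma pauliXZE (C : numClosedFieldType) a b (x y : 'I_2) :
  pauliXZ C a b x y = ((if a then x != y else x == y)%:R) * (if b then (-1) ^+ y else 1).
Proof.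
rewrite /pauliXZ; case: a; case: b; rewrite mxE !big_ord_recl !big_ord0 !mxE /=;
 case: x => [[|[|//]] hx]; case: y => [[|[|//]] hy] /=; simpl; ring.
Qed.

Lemma pauli_sum (C : numClosedFieldType) (x x' y y' : 'I_2) :
  \sum_(p : bool * bool) pauliXZ C p.1 p.2 x x' * Num.conj (pauliXZ C p.1 p.2 y y')
  = 2 * ((x == y) && (x' == y'))%:R.
Proof.
rewrite -(pair_bigA _ (fun a b => pauliXZ C a b x x' * Num.conj (pauliXZ C a b y y'))) /=.
rewrite !big_bool /= !pauliXZE.
rewrite !rmorphM !rmorph_nat !rmorphXn rmorphN1.
case: x => [[|[|//]] hx]; case: y => [[|[|//]] hy];
case: x' => [[|[|//]] hx']; case: y' => [[|[|//]] hy'] /=; ring.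
Qed.

Lemma bits_core d : forall r c, (r < 2 ^ d)%N -> (c < 2 ^ d)%N ->
  (forall e, (e < d)%N -> (r %/ 2 ^ e %% 2 = c %/ 2 ^ e %% 2)%N) -> r = c.
Proof.
elim: d => [|d IH] r c hr hc h.
  by move: hr hc; rewrite expn0 !ltnS !leqn0 => /eqP -> /eqP ->.
have h0 := h 0%N (ltn0Sn _); rewrite expn0 !divn1 in h0.
have e : (r %/ 2 = c %/ 2)%N.
  apply: IH.
  - by rewrite ltn_divLR // -expnSr.
  - by rewrite ltn_divLR // -expnSr.
  move=> e he; rewrite -!divnMA -expnS; exact: h.
by rewrite (divn_eq r 2) (divn_eq c 2) e h0.
Qed.

Lemma qbit_inj d (r c : 'I_(2 ^ d)) : (forall j, qbit r j = qbit c j) -> r = c.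
Proof.
move=> h; apply: val_inj; apply: (@bits_core d); [exact: ltn_ord | exact: ltn_ord | move=> e he].
have hj : (d.-1 - e < d)%N by lia.
have := h (Ordinal hj); rewrite /qbit /= => /(congr1 (@nat_of_ord 2)).
rewrite !inordK ?ltn_mod //.
by have -> : (d.-1 - (d.-1 - e) = e)%N by lia.
Qed.

Lemma key_sum (C : numClosedFieldType) d (r r' c c' : 'I_(2 ^ d)) :
  \sum_(k : key d) Uk C k r r' * Num.conj (Uk C k c c')
  = (2 ^ d)%:R * ((r == c) && (r' == c'))%:R.
Proof.
rewrite /Uk /tens.
under eq_bigr => k _ do rewrite !mxE rmorph_prod -big_split /=.
rewrite -(bigA_distr_bigA (fun j (p : bool * bool) =>
   pauliXZ C p.1 p.2 (qbit r j) (qbit r' j) * Num.conj (pauliXZ C p.1 p.2 (qbit c j) (qbit c' j)))) /=.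
under eq_bigr => j _ do rewrite pauli_sum.
case: (boolP ((r == c) && (r' == c'))) => [/andP[/eqP <- /eqP <-]|hne].
  under eq_bigr => j _ do rewrite !eqxx /= mulr1.
  by rewrite prodr_const card_ord natrX mulr1.
rewrite mulr0.
have [j hj] : exists j, ~~ ((qbit r j == qbit c j) && (qbit r' j == qbit c' j)).
  apply/existsP; apply: contraR hne => /existsPn h.
  apply/andP; split; apply/eqP; apply: qbit_inj => j; have := h j;
   rewrite negbK => /andP[/eqP ? /eqP ?] //.
by rewrite (bigD1 j) //= (negbTE hj) mulr0 mul0r.
Qed.

Lemma pauli_twirl (C : numClosedFieldType) d (M : 'M[C]_(2 ^ d)) :
  \sum_(k : key d) conjU k M = ((2 ^ d)%:R * \tr M) *: 1%:M.
Proof.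
apply/matrixP => r c; rewrite summxE.
transitivity (\sum_(k : key d) \sum_r' \sum_c' M r' c' * (Uk C k r r' * Num.conj (Uk C k c c'))).
  apply: eq_bigr => k _; rewrite /conjU mxE.
  under eq_bigr => c' _ do rewrite mxE mulr_suml.
  rewrite exchange_big /=; apply: eq_bigr => r' _; apply: eq_bigr => c' _.
  by rewrite !mxE mulrCA mulrA.
rewrite exchange_big /=.
under eq_bigr => r' _ do rewrite exchange_big /=.
under eq_bigr => r' _ do under eq_bigr => c' _ do rewrite -mulr_sumr key_sum.
rewrite !mxE.
case: (eqVneq r c) => [e|hrc] /=.
  rewrite mulr1 /mxtrace mulr_sumr; apply: eq_bigr => r' _.
  rewrite (bigD1 r') //= eqxx mulr1 big1 ?addr0; first by rewrite mulrC.
  by move=> c' hc'; rewrite eq_sym (negbTE hc') mulr0 mulr0.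
rewrite [RHS]mulr0 big1 // => r' _; rewrite big1 // => c' _.
by rewrite /= !mulr0.
Qed.


Lemma Vcol (C : numClosedFieldType) d1 d2 (l : 'I_(2 ^ d2)) : (d2 <= d1)%N ->
  \sum_(i < 2 ^ d1) Vmx C d1 d2 i l = 1.
Proof.
move=> hd.
have hl : (l * 2 ^ (d1 - d2) < 2 ^ d1)%N.
  have := ltn_ord l => hl.
  have -> : (2 ^ d1 = 2 ^ d2 * 2 ^ (d1 - d2))%N by rewrite -expnD subnKC.
  by rewrite ltn_pmul2r ?expn_gt0.
rewrite (bigD1 (Ordinal hl)) //= mxE eqxx big1 ?addr0 // => i hi.
rewrite mxE; case: eqP => // he; exfalso; move: hi; apply/negP; rewrite negbK.
by apply/eqP; apply: val_inj.
Qed.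

Lemma sumall_VV (C : numClosedFieldType) d1 d2 : (d2 <= d1)%N ->
  sumall (Vmx C d1 d2 *m adj (Vmx C d1 d2)) = (2 ^ d2)%:R.
Proof.
move=> hd.
rewrite /sumall.
transitivity (\sum_(l < 2 ^ d2) (\sum_(i < 2 ^ d1) Vmx C d1 d2 i l) *
                 Num.conj (\sum_(j < 2 ^ d1) Vmx C d1 d2 j l)).
  under eq_bigr => i _ do under eq_bigr => j _ do rewrite mxE.
  under eq_bigr => i _ do rewrite exchange_big /=.
  rewrite exchange_big /=; apply: eq_bigr => l _.
  rewrite mulr_suml; apply: eq_bigr => i _.
  rewrite rmorph_sum mulr_sumr; apply: eq_bigr => j _.
  by rewrite !mxE.
under eq_bigr => l _ do rewrite !Vcol // rmorph1 mulr1.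
by rewrite big_const_ord iter_addr_0.
Qed.

Lemma eigsE (C : numClosedFieldType) n (A : 'M[C]_n) :
  char_poly A = \prod_(z <- eigs A) ('X - z%:P).
Proof.
rewrite /eigs; case: closed_field_poly_normal => s /= hs.
by rewrite {1}hs (monicP (char_poly_monic A)) scale1r.
Qed.

Lemma size_eigs (C : numClosedFieldType) n (A : 'M[C]_n) : size (eigs A) = n.
Proof.
by apply: succn_inj; rewrite -(size_char_poly A) eigsE size_prod_XsubC.
Qed.

Lemma sum_eigs (C : numClosedFieldType) n (A : 'M[C]_n) : (0 < n)%N ->
  \sum_(z <- eigs A) z = \tr A.
Proof.
move=> hn; apply: oppr_inj; rewrite -(char_poly_trace A hn).
have -> : n.-1 = (size (eigs A)).-1 by rewrite size_eigs.
rewrite eigsE coefPn_prod_XsubC //.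
by rewrite size_eigs -lt0n.
Qed.

Lemma eigs_aIbJ (C : numClosedFieldType) n (a b : C) z :
  z \in eigs (a *: 1%:M + b *: const_mx 1 : 'M[C]_n) -> z = a \/ z = a + b * n%:R.
Proof.
set M := _ + _ => hz.
have : eigenvalue M z.
  by rewrite eigenvalue_root_char eigsE root_prod_XsubC.
move=> /eigenvalueP [v hv vn0].
set S := \sum_i v 0 i.
have hj : forall j, z * v 0 j = a * v 0 j + b * S.
  move=> j; have := congr1 (fun A : 'M[C]_(1, n) => A 0 j) hv; rewrite /= !mxE => <-.
  have e1 : \sum_i v 0 i * M i j = \sum_i (a * (v 0 i * (i == j)%:R) + b * v 0 i).
    by apply: eq_bigr => i _; rewrite /M !mxE; ring.
  rewrite e1 big_split /= -!mulr_sumr /S; congr (_ * _ + _).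
  rewrite (bigD1 j) //= eqxx mulr1 big1 ?addr0 // => i hi.
  by rewrite (negbTE hi) mulr0.
case: (eqVneq S 0) => hS.
  left.
  have [j hj0] : exists j, v 0 j != 0.
    apply/existsP; apply: contraR vn0 => /existsPn h.
    apply/eqP/matrixP => i j; rewrite ord1 mxE; have := h j; rewrite negbK => /eqP ->.
    done.
  by apply: (mulIf hj0); rewrite hj hS mulr0 addr0.
right.
have e : z * S = (a + b * n%:R) * S.
  rewrite {1}/S mulr_sumr.
  under eq_bigr => j _ do rewrite hj.
  rewrite big_split /= -mulr_sumr sumr_const card_ord -/S.
  by rewrite -mulr_natl; ring.
exact: (mulIf hS e).
Qed.

Lemma adj_aIbJ (C : numClosedFieldType) n (p q : C) :
  adj (p *: 1%:M + q *: const_mx 1 : 'M[C]_n) = Num.conj p *: 1%:M + Num.conj q *: const_mx 1.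
Proof.
apply/matrixP => i j; rewrite !mxE rmorphD !rmorphM rmorph_nat rmorph1.
by rewrite eq_sym.
Qed.

Lemma JJ (C : numClosedFieldType) n :
  (const_mx 1 : 'M[C]_n) *m (const_mx 1 : 'M[C]_n) = n%:R *: (const_mx 1 : 'M[C]_n).
Proof.
apply/matrixP => i j; rewrite !mxE.
under eq_bigr => k _ do rewrite !mxE mulr1.
by rewrite big_const_ord iter_addr_0 mulr1.
Qed.

Lemma mul_aIbJ (C : numClosedFieldType) n (p' q' p q : C) :
  (p' *: 1%:M + q' *: const_mx 1 : 'M[C]_n) *m (p *: 1%:M + q *: const_mx 1)
  = (p' * p) *: 1%:M + (p' * q + q' * p + q' * q * n%:R) *: const_mx 1.
Proof.
rewrite mulmxDl !mulmxDr -!scalemxAl -!scalemxAr !mul1mx !mulmx1 JJ.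
by apply/matrixP => i j; rewrite !mxE; ring.
Qed.

Lemma seq_two (C : numClosedFieldType) (s : seq C) a a' (f : C -> C) :
  (forall z, z \in s -> z = a \/ z = a') -> a != a' ->
  \sum_(z <- s) f z = f a *+ count_mem a s + f a' *+ count_mem a' s
  /\ size s = (count_mem a s + count_mem a' s)%N.
Proof.
move=> hs hne; elim: s hs => [|x s IH] hs; first by rewrite big_nil !mulr0n addr0.
have [e1 e2] := IH (fun z hz => hs z (mem_behead (s:=x :: s) hz)).
rewrite big_cons /= e1 e2.
case: (hs x (mem_head _ _)) => ->.
  rewrite eqxx (negbTE hne) /= add0n add1n; split; last by lia.
  by rewrite mulrS; ring.
have hne' : (a' == a) = false by rewrite eq_sym (negbTE hne).
rewrite eqxx hne' /= add0n add1n; split; last by lia.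
by rewrite mulrS; ring.
Qed.

Lemma tr_aIbJ (C : numClosedFieldType) n (a b : C) :
  \tr (a *: 1%:M + b *: const_mx 1 : 'M[C]_n) = (a + b) * n%:R.
Proof.
rewrite /mxtrace; under eq_bigr => i _ do rewrite !mxE eqxx !mulr1.
by rewrite big_const_ord iter_addr_0 mulr_natr.
Qed.

Lemma trnorm_JI (C : numClosedFieldType) n (y : C) : (2 < n)%N -> 0 < y ->
  trnorm ((-y) *: 1%:M + y *: const_mx 1 : 'M[C]_n) = 2 * (n%:R - 1) * y.
Proof.
move=> hn hy.
have cy : Num.conj y = y by apply: conj_Creal; apply: gtr0_real.
have hA : adj ((-y) *: 1%:M + y *: const_mx 1 : 'M[C]_n) = (-y) *: 1%:M + y *: const_mx 1.
  have ry : y \is Num.real by apply: gtr0_real.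
  rewrite adj_aIbJ; congr (_ *: _ + _ *: _).
    by apply/CrealP; rewrite realN.
  by apply/CrealP.
rewrite /trnorm hA mul_aIbJ.
set al := -y * -y; set be := (-y * y + y * -y + y * y * n%:R).
set M := (X in eigs X).
have y0 : y != 0 by rewrite gt_eqF.
have ebe : be = y ^+ 2 * (n - 2)%:R by rewrite natrB; [rewrite /be; ring | lia].
have bn0 : be * n%:R != 0.
  rewrite ebe !mulf_neq0 ?expf_neq0 // pnatr_eq0; lia.
have hne : al != al + be * n%:R.
  apply/negP => /eqP h; move: bn0; apply/negP; rewrite negbK.
  have -> : be * n%:R = (al + be * n%:R) - al by ring.
  by rewrite -h subrr.
have hz : forall z, z \in eigs M -> z = al \/ z = al + be * n%:R.
  by move=> z; apply: eigs_aIbJ.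
have [e1 e2] := seq_two id hz hne.
have [f1 _] := seq_two sqrtC hz hne.
rewrite size_eigs in e2.
have := sum_eigs M (ltnW (ltnW hn)); rewrite e1 /M tr_aIbJ => h.
set c0 := count_mem al (eigs M) in e2 h f1.
set c1 := count_mem (al + be * n%:R) (eigs M) in e2 h f1.
have hn' : (n%:R : C) = c0%:R + c1%:R by rewrite e2 natrD.
have hc0' : (c0%:R : C) = n%:R - c1%:R by rewrite hn' addrK.
rewrite -[al *+ c0]mulr_natr -[_ *+ c1]mulr_natr hc0' in h.
have hc1 : c1 = 1%N.
  have : (be * n%:R) * (c1%:R - 1) = 0.
    rewrite -(subrr ((al + be) * n%:R)) -{1}h.
    clear -C; ring.
  move/eqP; rewrite mulf_eq0 (negbTE bn0) /= subr_eq0 pnatr_eq1.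
  by move/eqP.
have hc0 : c0 = n.-1 by rewrite e2 hc1 addn1.
rewrite f1 hc0 hc1.
have -> : al = y ^+ 2 by rewrite /al; ring.
rewrite sqrCK ?ltW //.
have -> : y ^+ 2 + be * n%:R = (y * (n%:R - 1)) ^+ 2 by rewrite ebe natrB; [ring | lia].
rewrite sqrCK; last first.
  apply: mulr_ge0; first exact: ltW.
  rewrite subr_ge0 ler1n; lia.
have -> : (n%:R - 1 : C) = (n.-1)%:R by rewrite -subn1 natrB; [by [] | lia].
rewrite mulr1n -[y *+ _]mulr_natr; ring.
Qed.

Lemma EMo_eq (C : numClosedFieldType) d1 (Mo : 'M[C]_(2 ^ d1)) : \tr Mo = 1 ->
  EMo Mo = ((2 ^ d1)%:R)^-1 *: 1%:M.
Proof.
move=> htr; rewrite /EMo pauli_twirl htr mulr1 scalerA; congr (_ *: _).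
have h0 : ((2 ^ d1)%:R : C) != 0 by rewrite pnatr_eq0 expn_eq0.
rewrite mulnC expnM natrX expr2 invfM.
by rewrite -mulrA mulVf // mulr1.
Qed.

Lemma EMc_eq (C : numClosedFieldType) d1 d2 (Mc : 'M[C]_(2 ^ d2)) : \tr Mc = 1 ->
  EMc d1 Mc = ((2 ^ d2)%:R)^-1 *: (Vmx C d1 d2 *m adj (Vmx C d1 d2)).
Proof.
move=> htr; rewrite /EMc /Mcpp -mulmx_suml -mulmx_sumr pauli_twirl htr mulr1.
rewrite -scalemxAr mulmx1 -scalemxAl scalerA; congr (_ *: _).
have h0 : ((2 ^ d2)%:R : C) != 0 by rewrite pnatr_eq0 expn_eq0.
rewrite mulnC expnM natrX expr2 invfM.
by rewrite -mulrA mulVf // mulr1.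
Qed.

Lemma Mbar1_tr (C : numClosedFieldType) d1 d2 eta (Mo : 'M[C]_(2 ^ d1)) (Mc : 'M[C]_(2 ^ d2)) :
  \tr Mo = 1 -> \tr (Mbar1 eta Mo Mc) = 1.
Proof.
move=> htr; rewrite /Mbar1 /Ma1 tr_blk mxtraceZ EMo_eq // mxtraceZ mxtrace1.
have h0 : ((2 ^ d1)%:R : C) != 0 by rewrite pnatr_eq0 expn_eq0.
have h2 : (2 : C) != 0 by rewrite pnatr_eq0.
by field.
Qed.

Lemma Mbar1_sumall (C : numClosedFieldType) d1 d2 eta (Mo : 'M[C]_(2 ^ d1)) (Mc : 'M[C]_(2 ^ d2)) :
  (0 < eta)%N -> (d2 <= d1)%N -> \tr Mo = 1 -> \tr Mc = 1 ->
  sumall (Mbar1 eta Mo Mc) = 1 + 2 / eta%:R.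
Proof.
move=> he hd htr htc.
have he0 : (eta%:R : C) != 0 by rewrite pnatr_eq0 -lt0n.
have hc : sumall (EMc d1 Mc) = 1.
  by rewrite EMc_eq // sumallZ sumall_VV // mulVf // pnatr_eq0 expn_eq0.
have h0 : ((2 ^ d1)%:R : C) != 0 by rewrite pnatr_eq0 expn_eq0.
rewrite /Mbar1 /Ma1 EMo_eq //; move: (EMc d1 Mc) hc => E hc.
rewrite sumall_blk !sumallZ sumall_adj hc rmorph1.
rewrite sumall_scalar.
have h2 : (2 : C) != 0 by rewrite pnatr_eq0.
by field; rewrite ?he0 ?h0 ?h2.
Qed.

Lemma N_gt (d1 : nat) : (1 <= d1)%N -> (2 < 2 ^ d1.+1)%N.
Proof.
move=> h; rewrite expnS.
have : (2 <= 2 ^ d1)%N by rewrite -{1}(expn1 2) leq_exp2l.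
lia.
Qed.

Lemma twirl_Mbar1 (C : numClosedFieldType) d1 d2 eta (Mo : 'M[C]_(2 ^ d1)) (Mc : 'M[C]_(2 ^ d2)) :
  (1 <= d1)%N -> (0 < eta)%N -> (d2 <= d1)%N -> \tr Mo = 1 -> \tr Mc = 1 ->
  twirl (Mbar1 eta Mo Mc)
  = (((2 ^ d1.+1)%:R - 1 - 2 / eta%:R) / ((2 ^ d1.+1)%:R * ((2 ^ d1.+1)%:R - 1))) *: (1%:M : 'M[C]_(2 ^ d1.+1))
    + ((2 / eta%:R) / ((2 ^ d1.+1)%:R * ((2 ^ d1.+1)%:R - 1))) *: const_mx 1.
Proof.
move=> h1 he hd htr htc.
have hN := N_gt h1.
rewrite twirlE; last by lia.
rewrite Mbar1_tr // Mbar1_sumall //.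
have he0 : (eta%:R : C) != 0 by rewrite pnatr_eq0 -lt0n.
have N0 : ((2 ^ d1.+1)%:R : C) != 0 by rewrite pnatr_eq0; lia.
have N10 : ((2 ^ d1.+1)%:R - 1 : C) != 0 by rewrite subr_eq0 pnatr_eq1; lia.
by congr (_ *: _ + _ *: _); field; rewrite ?he0 ?N0 ?N10.
Qed.

Lemma castmxD (C : numClosedFieldType) m n (e : m = n) (A B : 'M[C]_m) :
  castmx (e, e) (A + B) = castmx (e, e) A + castmx (e, e) B.
Proof. by case: n / e; rewrite !castmx_id. Qed.

Lemma castmx0 (C : numClosedFieldType) m n (e : m = n) :
  castmx (e, e) (0 : 'M[C]_m) = 0.
Proof. by case: n / e; rewrite !castmx_id. Qed.

Lemma Ma0D (C : numClosedFieldType) d (A B : 'M[C]_(2 ^ d)) :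
  Ma0 (A + B) = Ma0 A + Ma0 B.
Proof. by rewrite /Ma0 /blk -castmxD add_block_mx !scalerDr addr0. Qed.

Lemma Ma00 (C : numClosedFieldType) d : Ma0 (0 : 'M[C]_(2 ^ d)) = 0.
Proof. by rewrite /Ma0 /blk scaler0 block_mx0 castmx0. Qed.

Lemma permconjD (C : numClosedFieldType) N (s : 'S_N) (A B : 'M[C]_N) :
  permconj s (A + B) = permconj s A + permconj s B.
Proof. by rewrite /permconj mulmxDr mulmxDl. Qed.

Lemma permconj0 (C : numClosedFieldType) N (s : 'S_N) :
  permconj s (0 : 'M[C]_N) = 0.
Proof. by rewrite /permconj mulmx0 mul0mx. Qed.

Lemma Ma0_scalar (C : numClosedFieldType) d (c : C) :
  Ma0 (c *: (1%:M : 'M[C]_(2 ^ d))) = (2^-1 * c)%:M.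
Proof.
by rewrite /Ma0 /blk scalerA scalemx1 -scalar_mx_block scalar_cast.
Qed.

Lemma EMf0_eq (C : numClosedFieldType) d1 (Mo : 'M[C]_(2 ^ d1)) : \tr Mo = 1 ->
  EMf0 Mo = ((2 ^ d1.+1)%:R)^-1 *: 1%:M.
Proof.
move=> htr; rewrite /EMf0.
have e : forall s : 'S_(2 ^ d1.+1), \sum_(k : key d1) permconj s (Ma0 (conjU k Mo))
   = (2^-1 * ((2 ^ d1)%:R * 1))%:M.
  move=> s.
  rewrite -(big_morph (permconj s) (@permconjD C _ s) (@permconj0 C _ s)).
  rewrite -(big_morph (@Ma0 C d1) (@Ma0D C d1) (@Ma00 C d1)).
  by rewrite pauli_twirl htr Ma0_scalar permconj_scalar.
under eq_bigr => s _ do rewrite e.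
rewrite sumr_const card_Sn -scaler_nat scalerA -scalemx1 scalerA.
congr (_ *: _).
have h0 : ((2 ^ d1)%:R : C) != 0 by rewrite pnatr_eq0 expn_eq0.
have hf : ((2 ^ d1.+1)`!%:R : C) != 0 by rewrite pnatr_eq0 -lt0n fact_gt0.
have e2 : ((expn 2 (muln 2 d1))%:R : C) = (2 ^ d1)%:R * (2 ^ d1)%:R by rewrite mul2n -addnn expnD natrM.
have eN : ((expn 2 d1.+1)%:R : C) = 2 * (2 ^ d1)%:R by rewrite expnS natrM.
rewrite natrM e2 eN.
by field; rewrite ?h0 ?hf.
Qed.

Lemma tdist_self (C : numClosedFieldType) n (A : 'M[C]_n) : tdist A A = 0.
Proof.
rewrite /tdist subrr /trnorm.
have -> : adj (0 : 'M[C]_n) *m 0 = 0 *: 1%:M + 0 *: const_mx 1.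
  by rewrite mulmx0 !scale0r addr0.
rewrite big_seq big1 ?mulr0 // => z /eigs_aIbJ [->|->].
  exact: sqrtC0.
by rewrite mul0r addr0 sqrtC0.
Qed.

Theorem theorem13 (C : numClosedFieldType) (d1 d2 eta : nat) (eps : C)
  (Mo : 'M[C]_(2 ^ d1)) (Mc : 'M[C]_(2 ^ d2)) :
  (1 <= d2)%N -> (d2 <= d1)%N ->
  density Mo -> posdef Mo -> density Mc ->
  (0 < eta)%N -> 0 < eps -> (eta%:R)^-1 < eps ->
  (forall (k : key d1) (k' : key d2),
     ((eta%:R)^-2 : C) *
       opnorm (Mcpp d1 k' Mc *m invmx (conjU k Mo) *m Mcpp d1 k' Mc)
     <= 4^-1 * lambda_min (conjU k Mo)) ->
  let N := (2 ^ d1.+1)%N in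
  [/\ (* (i) *)
      EMf0 Mo = (N%:R)^-1 *: (1%:M : 'M[C]_N),
      (* (ii) *)
      [/\ EMo Mo = ((2 ^ d1)%:R)^-1 *: 1%:M,
          EMc d1 Mc = ((2 ^ d2)%:R)^-1 *: (Vmx C d1 d2 *m adj (Vmx C d1 d2)) &
          twirl (Mbar1 eta Mo Mc)
          = ((N%:R - 1 - 2 / eta%:R) / (N%:R * (N%:R - 1))) *: (1%:M : 'M[C]_N)
            + ((2 / eta%:R) / (N%:R * (N%:R - 1))) *: const_mx 1],
      (* (iii) *)
      tdist (twirl (Mbar1 eta Mo Mc)) (EMf0 Mo) = (eta%:R * (2 ^ d1)%:R)^-1
      /\ (eta%:R * (2 ^ d1)%:R)^-1 < eps &
      (* (iv) *)
      forall (Mo2 : 'M[C]_(2 ^ d1)) (Mc2 : 'M[C]_(2 ^ d2)),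
        density Mo2 -> posdef Mo2 -> density Mc2 ->
        tdist (twirl (Mbar1 eta Mo Mc)) (twirl (Mbar1 eta Mo2 Mc2)) = 0].
Proof.
move=> h2 hd [_ _ trMo] _ [_ _ trMc] he heps hlt _ N; rewrite {}/N.
have h1 : (1 <= d1)%N by lia.
have hN := N_gt h1.
have he0 : (eta%:R : C) != 0 by rewrite pnatr_eq0 -lt0n.
have d0 : ((2 ^ d1)%:R : C) != 0 by rewrite pnatr_eq0 expn_eq0.
have eN : ((expn 2 d1.+1)%:R : C) = 2 * (2 ^ d1)%:R by rewrite expnS natrM.
have N10 : ((2 ^ d1.+1)%:R - 1 : C) != 0 by rewrite subr_eq0 pnatr_eq1; lia.
split.
- exact: EMf0_eq.
- split; [exact: EMo_eq | exact: EMc_eq | exact: twirl_Mbar1].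
- split.
    rewrite /tdist twirl_Mbar1 // EMf0_eq //.
    set y := (2 / eta%:R) / ((2 ^ d1.+1)%:R * ((2 ^ d1.+1)%:R - 1)).
    have -> : (((2 ^ d1.+1)%:R - 1 - 2 / eta%:R) / ((2 ^ d1.+1)%:R * ((2 ^ d1.+1)%:R - 1))) *: (1%:M : 'M[C]_(2 ^ d1.+1)) + y *: const_mx 1 - ((2 ^ d1.+1)%:R)^-1 *: 1%:M
        = (-y) *: 1%:M + y *: const_mx 1.
      apply/matrixP => i j; rewrite !mxE /y.
      rewrite eN in N10 *.
      by field; rewrite ?he0 ?d0 ?N10.
    have ypos : 0 < y.
      rewrite /y divr_gt0 // ?divr_gt0 ?ltr0n // mulr_gt0 ?ltr0n ?expn_gt0 //.
      by rewrite subr_gt0 ltr1n; lia.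
    rewrite trnorm_JI //.
    rewrite /y; rewrite eN in N10 *.
    by field; rewrite ?he0 ?d0 ?N10.
  apply: le_lt_trans hlt.
  rewrite invfM ler_piMr // ?invr_ge0 ?ler0n // invf_le1 ?ltr0n ?expn_gt0 //.
  by rewrite ler1n expn_gt0.
- move=> Mo2 Mc2 [_ _ trMo2] _ [_ _ trMc2].
  by rewrite !twirl_Mbar1 // tdist_self.
Qed.
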